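(* Let $\mathbb{K}=(G,M,I)$ be a finite formal context and let $S\subseteq\mathfrak{B}(\mathbb{K})$ be a set of formal concepts. Then $I_S=\bigcup_{(A,B)\in\mathfrak{B}(\mathbb{K})\setminus S}A\times B$, $G_S=\bigcup_{(A,B)\in\mathfrak{B}(\mathbb{K})\setminus S}A$, and $M_S=\bigcup_{(A,B)\in\mathfrak{B}(\mathbb{K})\setminus S}B$.
   Context: A formal context $(G,M,I)$ consists of sets $G$ (objects), $M$ (attributes) and $I\subseteq G\times M$. For $A\subseteq G$ let $A'=\{m\in M\mid (g,m)\in I\ \forall g\in A\}$ and for $B\subseteq M$ let $B'=\{g\in G\mid (g,m)\in I\ \forall m\in B\}$. A formal concept is a pair $(A,B)$ with $A'=B$, $B'=A$; $\mathfrak{B}(\mathbb{K})$ is the set of all formal concepts. For $S\subseteq\mathfrak{B}(\mathbb{K})$ the $S$-removed incidences, objects and attributes are $I_S=I\setminus\big(\bigcup_{(A,B)\in S}A\times B\setminus\bigcup_{(A,B)\in\mathfrak{B}(\mathbb{K})\setminus S}A\times B\big)$, $G_S=G\setminus\big(\bigcup_{(A,B)\in S}A\setminus\bigcup_{(A,B)\in\mathfrak{B}(\mathbb{K})\setminus S}A\big)$, $M_S=M\setminus\big(\bigcup_{(A,B)\in S}B\setminus\bigcup_{(A,B)\in\mathfrak{B}(\mathbb{K})\setminus S}B\big)$. *)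

(* Defs.v *)
From mathcomp Require Import all_boot.
Set Implicit Arguments. Unset Strict Implicit. Unset Printing Implicit Defensive.

Section FCA.
Variables (G M : finType) (I : G -> M -> bool).

Definition derG (A : {set G}) : {set M} := [set m | [forall g in A, I g m]].
Definition derM (B : {set M}) : {set G} := [set g | [forall m in B, I g m]].

Definition incidence : {set G * M} := [set gm | I gm.1 gm.2].

Definition is_concept (c : {set G} * {set M}) : bool :=
  (derG c.1 == c.2) && (derM c.2 == c.1).
Definition concepts : {set {set G} * {set M}} := [set c | is_concept c].

Definition unionI (T : {set {set G} * {set M}}) : {set G * M} :=
  \bigcup_(c in T) setX c.1 c.2.
Definition unionG (T : {set {set G} * {set M}}) : {set G} :=
  \bigcup_(c in T) c.1.
Definition unionM (T : {set {set G} * {set M}}) : {set M} :=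
  \bigcup_(c in T) c.2.

Definition I_S (S : {set {set G} * {set M}}) : {set G * M} :=
  incidence :\: (unionI S :\: unionI (concepts :\: S)).
Definition G_S (S : {set {set G} * {set M}}) : {set G} :=
  [set: G] :\: (unionG S :\: unionG (concepts :\: S)).
Definition M_S (S : {set {set G} * {set M}}) : {set M} :=
  [set: M] :\: (unionM S :\: unionM (concepts :\: S)).
End FCA.

(* Main.v *)
Require Import Defs.
From mathcomp Require Import all_boot.

Section Aux.
Variables (G M : finType) (I : G -> M -> bool).

Lemma derG_anti (A A' : {set G}) : A \subset A' -> derG I A' \subset derG I A.
Proof.
move=> sA; apply/subsetP=> m; rewrite !inE => /forall_inP H.
by apply/forall_inP=> g gA; apply: H; apply: (subsetP sA).
Qed.

Lemma derM_anti (B B' : {set M}) : B \subset B' -> derM I B' \subset derM I B.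
Proof.
move=> sB; apply/subsetP=> g; rewrite !inE => /forall_inP H.
by apply/forall_inP=> m mB; apply: H; apply: (subsetP sB).
Qed.

Lemma ext_G (A : {set G}) : A \subset derM I (derG I A).
Proof.
apply/subsetP=> g gA; rewrite inE; apply/forall_inP=> m; rewrite inE.
by move/forall_inP; apply.
Qed.

Lemma ext_M (B : {set M}) : B \subset derG I (derM I B).
Proof.
apply/subsetP=> m mB; rewrite inE; apply/forall_inP=> g; rewrite inE.
by move/forall_inP; apply.
Qed.

Lemma derGMG (A : {set G}) : derG I (derM I (derG I A)) = derG I A.
Proof.
apply/eqP; rewrite eqEsubset ext_M andbT; apply: derG_anti; exact: ext_G.
Qed.

Lemma derMGM (B : {set M}) : derM I (derG I (derM I B)) = derM I B.
Proof.
apply/eqP; rewrite eqEsubset ext_G andbT; apply: derM_anti; exact: ext_M.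
Qed.

Lemma concept_inc c g m : c \in concepts I -> g \in c.1 -> m \in c.2 -> I g m.
Proof.
rewrite inE /is_concept => /andP[/eqP <- _] gA.
by rewrite inE => /forall_inP; apply.
Qed.

Definition cg g : {set G} * {set M} := (derM I (derG I [set g]), derG I [set g]).
Definition cm m : {set G} * {set M} := (derM I [set m], derG I (derM I [set m])).

Lemma cg_concept g : is_concept I (cg g).
Proof. by rewrite /is_concept /cg /= derGMG !eqxx. Qed.
Lemma cm_concept m : is_concept I (cm m).
Proof. by rewrite /is_concept /cm /= derMGM !eqxx. Qed.

Lemma cg_in g : g \in (cg g).1.
Proof. by apply: (subsetP (ext_G [set g])); rewrite inE. Qed.
Lemma cm_in m : m \in (cm m).2.
Proof. by apply: (subsetP (ext_M [set m])); rewrite inE. Qed.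
Lemma cg_in2 g m : I g m -> m \in (cg g).2.
Proof.
move=> H; rewrite /cg /= inE; apply/forall_inP=> x; rewrite inE => /eqP -> //.
Qed.
End Aux.

Theorem lemma1 (G M : finType) (I : G -> M -> bool)
  (S : {set {set G} * {set M}}) (HS : S \subset concepts I) :
  [/\ I_S I S = unionI (concepts I :\: S),
      G_S I S = unionG (concepts I :\: S) &
      M_S I S = unionM (concepts I :\: S)].
Proof.
split.
- apply/setP=> [[g m]]; rewrite /I_S /unionI !inE /=.
  case: (boolP (_ \in \bigcup_(c in concepts I :\: S) _)) => HN.
  + rewrite ?andbF ?andbT /=.
    case/bigcupP: HN => c; rewrite !inE => /andP[_ cC].
    case/andP=> /= gA mB; by apply: (@concept_inc _ _ I c) => //; rewrite inE.
  + rewrite /=; case Igm: (I g m); rewrite ?andbT ?andbF //.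
    suff ->: (g, m) \in \bigcup_(c in S) setX c.1 c.2 by [].
    apply/negPn/negP=> HS'.
    case/negP: HN; apply/bigcupP; exists (@cg _ _ I g).
      by rewrite !inE cg_concept andbT; apply/negP=> H; apply: (negP HS');
         apply/bigcupP; exists (@cg _ _ I g) => //; rewrite in_setX cg_in cg_in2.
    by rewrite in_setX cg_in cg_in2.
- apply/setP=> g; rewrite /G_S /unionG !inE /=.
  case: (boolP (_ \in \bigcup_(c in concepts I :\: S) _)) => HN; rewrite ?andbF ?andbT //=.
  apply/negbF/negPn/negP=> HS'; case/negP: HN; apply/bigcupP; exists (@cg _ _ I g); last exact: cg_in.
  rewrite !inE cg_concept andbT; apply/negP=> H; apply: (negP HS').
  by apply/bigcupP; exists (@cg _ _ I g) => //; apply: cg_in.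
- apply/setP=> m; rewrite /M_S /unionM !inE /=.
  case: (boolP (_ \in \bigcup_(c in concepts I :\: S) _)) => HN; rewrite ?andbF ?andbT //=.
  apply/negbF/negPn/negP=> HS'; case/negP: HN; apply/bigcupP; exists (@cm _ _ I m); last exact: cm_in.
  rewrite !inE cm_concept andbT; apply/negP=> H; apply: (negP HS').
  by apply/bigcupP; exists (@cm _ _ I m) => //; apply: cm_in.
Qed.
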